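(* Let $M$ be a positive integer and $L$ a positive divisor of $M$ with $L^*>2$, and let $\ell$ be the number of prime divisors of $L$. Then $I_1(L,M)=\varphi(L^* )\big(M^2/L^*-(-1)^\ell\epsilon\big)/8$, where $\epsilon=1$ if $M$ is odd, $\epsilon=2$ if $M\equiv2\bmod4$ and $L^*$ is even, and $\epsilon=0$ otherwise.
   Context: For a positive integer $n$, $n^*$ denotes the product of the distinct prime divisors of $n$, and $\varphi$ is Euler's totient function. For a positive integer $M$, a positive divisor $L$ of $M$ and an integer $k\ge0$, $I_k(L,M)=\sum_t t^k$, the sum over integers $t$ with $0<t<M/2$ and $\gcd(t,L)=1$. *)

(* Defs.v *)
From mathcomp Require Import all_boot all_order all_algebra.
Set Implicit Arguments. Unset Strict Implicit. Unset Printing Implicit Defensive.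

Definition nstar (n : nat) : nat := \prod_(p <- primes n) p.

Definition Isum (k L M : nat) : nat :=
  \sum_(0 <= t < M | (0 < t) && (2 * t < M) && coprime t L) t ^ k.

Definition eps (L M : nat) : nat :=
  if odd M then 1
  else if (M %% 4 == 2) && ~~ odd (nstar L) then 2 else 0.

(* Main.v *)
Require Import Defs.
From mathcomp Require Import all_boot all_order all_algebra.
From mathcomp Require Import zify ring.
Import GRing.Theory Num.Theory.

Definition cop (s : seq nat) (t : nat) := all (fun p => ~~ (p %| t)) s.
Definition J s M := (\sum_(0 <= t < M | (0 < t) && (2 * t < M) && cop s t) t)%N.

Lemma J_base M n : (forall t, (2 * t < M) = (t < n))%N -> (n <= M)%N ->
  J [::] M = (\sum_(0 <= t < n) t)%N.
Proof.
move=> H nM; rewrite /J (big_cat_nat (leq0n n) nM) /=.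
rewrite [X in (_ + X)%N]big1_seq ?addn0; last first.
  move=> i /andP[/andP[/andP[_ +] _]]; rewrite mem_index_iota H => ? ?; lia.
rewrite big_mkcond /= big_nat_cond [RHS]big_nat_cond; apply: eq_bigr => i.
rewrite andbT => /andP[_ lin]; rewrite H lin /cop /= andbT.
by case: i {lin}.
Qed.

Lemma J_base8 M : (J [::] M * 8 + (if odd M then 1 else 2 * M) = M ^ 2)%N.
Proof.
rewrite -{1 3 4}(odd_double_half M); case: (odd M) => /=.
- rewrite (@J_base _ (M./2).+1); first last.
  + rewrite -muln2; lia.
  + move=> t; rewrite -muln2; apply/idP/idP; lia.
  rewrite bin2_sum bin2 /= -muln2.
  have := odd_double_half (M./2.+1 * M./2); rewrite -muln2 oddM /= andNb /=.
  move: ((M./2.+1 * M./2)./2) => h; lia.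
- rewrite (@J_base _ M./2); first last.
  + rewrite -muln2; lia.
  + move=> t; rewrite -muln2; apply/idP/idP; lia.
  rewrite bin2_sum bin2.
  have := odd_double_half (M./2 * M./2.-1).
  have -> : odd (M./2 * M./2.-1) = false.
    by case: (M./2) => [|k] //=; rewrite oddM /=; case: (odd k).
  rewrite -muln2 /=.
  move: ((M./2 * M./2.-1)./2) => h; move: (M./2) => k; case: k => [|k] /=; lia.
Qed.

Lemma sum_mult (p m : nat) (Q : pred nat) (F : nat -> nat) : (0 < p)%N ->
 (\sum_(0 <= t < m * p | (p %| t) && Q t) F t =
  \sum_(0 <= u < m | Q (u * p)) F (u * p))%N.
Proof.
move=> p0; elim: m => [|m IH]; first by rewrite mul0n !big_geq.
rewrite mulSnr (big_cat_nat (leq0n (m * p)) (leq_addr _ _)) /= IH.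
rewrite [RHS]big_mkcond big_nat_recr //= -big_mkcond; congr (_ + _)%N.
rewrite big_ltn_cond; last by lia.
rewrite dvdn_mull ?dvdnn //=.
rewrite big1_seq; last first.
  move=> i /andP[/andP[/dvdnP[k ->] _]]; rewrite mem_index_iota -mulSnr => /andP[]; rewrite ltn_pmul2r // => h1.
  by rewrite ltn_pmul2r // ltnS leqNgt h1.
by case: (Q (m * p)); rewrite ?addn0.
Qed.

Lemma cop_mul s p u : prime p -> p \notin s -> all prime s -> cop s (u * p) = cop s u.
Proof.
move=> pp ps aps; apply: eq_in_all => q qs /=.
rewrite Euclid_dvdM ?(allP aps) // (dvdn_prime2 (allP aps q qs) pp).
have -> // : (q == p) = false.
by apply/eqP => E; rewrite -E qs in ps.
by rewrite orbF.
Qed.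

Lemma J_rec p s m : prime p -> p \notin s -> all prime s ->
  J s (m * p) = (J (p :: s) (m * p) + p * J s m)%N.
Proof.
move=> pp ps aps; have p0 := prime_gt0 pp.
rewrite /J (bigID (fun t => p %| t)) /= addnC; congr (_ + _)%N.
  by apply: eq_bigl => t; rewrite /cop /=; case: (p %| t); rewrite ?andbF ?andbT.
rewrite (eq_bigl (fun t => (p %| t) && ((0 < t) && (2 * t < m * p) && cop s t))); last first.
  by move=> t; rewrite andbC.
rewrite sum_mult // big_distrr /=; apply: eq_big => u; last by rewrite mulnC.
rewrite cop_mul // muln_gt0 p0 andbT mulnA ltn_pmul2r //.
Qed.

Definition Pp (s : seq nat) := (\prod_(q <- s) q)%N.
Definition Fs (s : seq nat) := (\prod_(q <- s) q.-1)%N.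

Lemma Pp_gt0 s : all prime s -> (0 < Pp s)%N.
Proof.
elim: s => [|q s IH] /=; first by rewrite /Pp big_nil.
by move=> /andP[qp aps]; rewrite /Pp big_cons muln_gt0 (prime_gt0 qp) -/(Pp s) IH.
Qed.

Lemma Pp_gt1 s : all prime s -> s != [::] -> (1 < Pp s)%N.
Proof.
case: s => [|q s] // /= /andP[qp /Pp_gt0] h _.
rewrite /Pp big_cons -/(Pp s); have := prime_gt1 qp; nia.
Qed.

Lemma Pp_2 s : all prime s -> Pp s = 2%N -> s = [:: 2%N].
Proof.
case: s => [|q s] /=; first by rewrite /Pp big_nil.
case/andP=> qp aps; rewrite /Pp big_cons -/(Pp s) => E.
have q1 := prime_gt1 qp.
case: s aps E => [|r s] aps E.
  by move: E; rewrite /Pp big_nil muln1 => ->.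
have := @Pp_gt1 _ aps isT; lia.
Qed.

Lemma Pp_odd s : all prime s -> (2 \notin s) -> odd (Pp s).
Proof.
elim: s => [|q s IH] /=; first by rewrite /Pp big_nil.
case/andP=> qp aps; rewrite in_cons negb_or => /andP[q2 n2].
rewrite /Pp big_cons oddM -/(Pp s) IH // andbT.
by case: (even_prime qp) => // E; rewrite E in q2.
Qed.

Lemma mod42 m : (((m * 2) %% 4 == 2) = odd m)%N.
Proof.
rewrite mulnC -{1}(odd_double_half m). case: (odd m) => /=; rewrite -!muln2; apply/eqP; lia.
Qed.

Lemma mod4odd m p : odd p -> (((m * p) %% 4 == 2) = (m %% 4 == 2))%N.
Proof.
move=> op. rewrite -modnMml -modnMmr.
have : odd (p %% 4) by rewrite odd_mod.
have : (p %% 4 < 4)%N by rewrite ltn_mod.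
have : (m %% 4 < 4)%N by rewrite ltn_mod.
by case: (m %% 4) => [|[|[|[|]]]] //; case: (p %% 4) => [|[|[|[|]]]].
Qed.

Local Open Scope ring_scope.

Definition Cc (P F l M : nat) : rat :=
  if odd M then (-1) ^+ l * F%:R
  else if P == 1%N then 2 * M%:R
  else if P == 2%N then (if (M %% 4 == 2)%N then 2 * M%:R - 2 else 0)
  else if ~~ odd P && (M %% 4 == 2)%N then 2 * ((-1) ^+ l * F%:R) else 0.

Lemma Cc_step p s m : prime p -> p \notin s -> all prime s ->
  Cc (p * Pp s) (p.-1 * Fs s) (size s).+1 (m * p) =
  Cc (Pp s) (Fs s) (size s) (m * p) - p%:R * Cc (Pp s) (Fs s) (size s) m.
Proof.
move=> pp ps aps; have p1 := prime_gt1 pp.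
case: (even_prime pp) => [p2|op].
  subst p; case: s ps aps => [|q s] ps aps.
    rewrite /Cc /Pp /Fs !big_nil /= !muln1 oddM andbF mod42 /=.
    by case: (odd m) => /=; rewrite ?natrM; ring.
  have o := @Pp_odd _ aps ps; have g := @Pp_gt1 _ aps isT.
  move: (Pp (q :: s)) (Fs (q :: s)) (size (q :: s)) o g => P F l o g.
  rewrite /Cc oddM andbF mod42 oddM /= o /=.
  have -> : (2 * P == 1)%N = false by apply/eqP; lia.
  have -> : (2 * P == 2)%N = false by apply/eqP; lia.
  have -> : (P == 1)%N = false by apply/eqP; lia.
  have -> : (P == 2)%N = false by apply/eqP => E; rewrite E in o.
  rewrite exprS; move: ((-1) ^+ l) => e.
  by case: (odd m) => /=; rewrite ?natrM; ring.
case: p pp ps op p1 => [|q] // pp ps op p1 /=.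
case: s ps aps => [|r s] ps aps.
  rewrite /Cc /Pp /Fs !big_nil /= !muln1 oddM op andbT.
  have -> : (q.+1 == 1)%N = false by apply/eqP; lia.
  have -> : (q.+1 == 2)%N = false by apply/eqP => E; rewrite E in op.
  have -> : odd q = false by move: op => /= /negbTE.
  by case: (odd m) => /=; rewrite ?natrM -[q.+1]addn1 ?natrD; ring.
have g := @Pp_gt1 _ aps isT.
have [E|NE] := eqVneq (Pp (r :: s)) 2%N.
  have := @Pp_2 _ aps E => -[-> ->]; rewrite /Cc /Pp /Fs !big_cons !big_nil /=.
  rewrite ?muln1 ?mul1n oddM op andbT.
  have -> : (q.+1 * 2 == 2)%N = false by apply/eqP; lia.
  rewrite oddM andbF /= mod4odd //.
  case: (odd m) => /=; first by rewrite -[q.+1]addn1 ?natrD; ring.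
  by case: (m %% 4 == 2)%N => /=; rewrite ?natrM -[q.+1]addn1 ?natrD; ring.
move: (Pp (r :: s)) (Fs (r :: s)) (size (r :: s)) g NE => P F l g NE.
rewrite /Cc oddM op andbT (negbTE NE) mod4odd // oddM op /=.
have -> : (q.+1 * P == 1)%N = false by apply/eqP; lia.
have -> : (q.+1 * P == 2)%N = false by apply/eqP; nia.
have -> : (P == 1)%N = false by apply/eqP; lia.
rewrite exprS; move: ((-1) ^+ l) => e.
case: (odd m) => /=; first by rewrite natrM -[q.+1]addn1 ?natrD; ring.
by case: (~~ odd P && (m %% 4 == 2))%N => /=; rewrite ?natrM -[q.+1]addn1 ?natrD; ring.
Qed.

Lemma mainJ s : uniq s -> all prime s -> forall M, all (fun p => p %| M)%N s ->
  (J s M)%:R * 8 = (Fs s)%:R * (M ^ 2)%:R / (Pp s)%:R - Cc (Pp s) (Fs s) (size s) M.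
Proof.
elim: s => [|p s IH] /=.
  move=> _ _ M _; have := J_base8 M; rewrite /Fs /Pp !big_nil /Cc /=.
  move=> /(congr1 (fun n => n%:R : rat)); rewrite natrD natrM.
  case: (odd M) => /= h; rewrite -h ?natrM divr1 mul1r ?expr0; ring.
move=> /andP[ps us] /andP[pp aps] M /andP[pM aM].
case/dvdnP: pM => m EM; subst M.
have am : all (fun q => q %| m)%N s.
  apply/allP => q qs; have /= := allP aM q qs.
  rewrite Euclid_dvdM ?(allP aps) // (dvdn_prime2 (allP aps q qs) pp).
  have -> // : (q == p) = false.
  by apply/eqP => E; rewrite -E qs in ps.
  by rewrite orbF.
have Hr := @J_rec p s m pp ps aps.
have := congr1 (fun n => n%:R : rat) Hr; rewrite natrD natrM => Hr'.
have -> : (J (p :: s) (m * p))%:R = (J s (m * p))%:R - p%:R * (J s m)%:R :> rat.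
  by rewrite Hr'; ring.
rewrite /Fs /Pp !big_cons -/(Fs s) -/(Pp s) Cc_step //.
rewrite mulrBl -[p%:R * _ * 8]mulrA (IH us aps _ aM) (IH us aps m am).
have P0 : (Pp s)%:R != 0 :> rat by rewrite pnatr_eq0 -lt0n Pp_gt0.
have p0 : p%:R != 0 :> rat by rewrite pnatr_eq0 -lt0n prime_gt0.
case: p pp ps p0 {Hr Hr' am aM} => [|q] // pp ps p0.
rewrite -/(q.+1.-1) /= !natrX !natrM -[q.+1]addn1 natrD.
rewrite -[q.+1]addn1 natrD in p0.
field.
by rewrite P0 p0.
Qed.

Lemma notdvd_Pp p s : prime p -> p \notin s -> all prime s -> ~~ (p %| Pp s)%N.
Proof.
move=> pp; elim: s => [|q s IH] /=.
  by rewrite /Pp big_nil dvdn1 => _ _; apply/eqP => E; rewrite E in pp.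
rewrite in_cons negb_or => /andP[pq ps] /andP[qp aps].
rewrite /Pp big_cons -/(Pp s) Euclid_dvdM // negb_or IH // andbT.
by rewrite (dvdn_prime2 pp qp).
Qed.

Lemma totient_Pp s : uniq s -> all prime s -> totient (Pp s) = Fs s.
Proof.
elim: s => [|p s IH] /=; first by rewrite /Pp /Fs !big_nil.
move=> /andP[ps us] /andP[pp aps].
rewrite /Pp /Fs !big_cons -/(Pp s) -/(Fs s) totient_coprime.
  by rewrite (totient_prime pp) IH.
by rewrite prime_coprime // notdvd_Pp.
Qed.

Lemma Isum_J L M : (0 < L)%N -> Isum 1 L M = J (primes L) M.
Proof.
move=> L0; rewrite /Isum /J; apply: eq_big => [t|t _]; last by rewrite expn1.
case: t => [|t] //=; congr (_ && _).
rewrite coprime_has_primes // -all_predC; apply: eq_in_all => p.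
by rewrite mem_primes => /andP[pp _] /=; rewrite mem_primes pp.
Qed.

Theorem propositionA1 (M L : nat) (HM : (0 < M)%N) (HL : (0 < L)%N)
  (HLM : (L %| M)%N) (Hnstar : (2 < nstar L)%N) :
  ((Isum 1 L M)%:R : rat) =
    (totient (nstar L))%:R *
      ((M ^ 2)%:R / (nstar L)%:R - (-1) ^+ size (primes L) * (eps L M)%:R) / 8.
Proof.
have us := primes_uniq L; have aps := all_prime_primes L.
have aM : all (fun p => p %| M)%N (primes L).
  apply/allP => p; rewrite mem_primes => /and3P[_ _ pL]; exact: dvdn_trans HLM.
have H := @mainJ _ us aps M aM.
have -> : nstar L = Pp (primes L) by [].
rewrite Isum_J // totient_Pp //.
rewrite -[LHS](mulfK (_ : 8 != 0)) // H.
rewrite /Cc /eps /nstar -/(Pp (primes L)).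
have -> : (Pp (primes L) == 1)%N = false by apply/eqP => E; rewrite /nstar -/(Pp _) E in Hnstar.
have -> : (Pp (primes L) == 2)%N = false by apply/eqP => E; rewrite /nstar -/(Pp _) E in Hnstar.
move: ((-1) ^+ size (primes L)) => e.
case: (odd M) => /=; first by ring.
rewrite andbC; case: (_ && _) => /=; ring.
Qed.
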